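(* Let $G$ be a finite simple graph with a clique vertex-partition $\Pi$, and let $t\ge 2$ be an integer. Then $\mathrm{CF}_t(G(\Pi,t))$ is $(t-2)$-decomposable. Consequently, $\mathrm{CF}_t(G(\Pi,t))$ is shellable.
   Context: A clique vertex-partition of $G$ is a collection $\Pi=\{W_1,\dots,W_p\}$ of pairwise disjoint (possibly empty) vertex sets each inducing a clique, whose union is $V(G)$. The $t$-clique whiskering $G(\Pi,t)$ is obtained from $G$ by adding, for each $i$, $t-1$ new distinct vertices $x_{i,1},\dots,x_{i,t-1}$ and making $W_i\cup\{x_{i,1},\dots,x_{i,t-1}\}$ a clique; no other edges are added. $\mathrm{CF}_t(\cdot)$ is the simplicial complex on the vertex set whose faces are the vertex subsets inducing no $t$-clique. For a simplicial complex $\Delta$ on $V$ and face $F$: $\operatorname{link}_\Delta(F)=\{F':F'\cap F=\emptyset,F'\cup F\in\Delta\}$, $\Delta\setminus F=\{H\in\Delta:H\cap F=\emptyset\}$, $\dim F=|F|-1$. A face $\sigma$ is a shedding face if for every $\tau\in\Delta$ with $\sigma\subseteq\tau$ and every $v\in\sigma$ there is $w\in V\setminus\tau$ with $(\tau\cup\{w\})\setminus\{v\}\in\Delta$. $\Delta$ is $k$-decomposable if it is a simplex (including $\emptyset$, $\{\emptyset\}$) or has a shedding face $\sigma$ with $\dim\sigma\le k$ such that $\Delta\setminus\sigma$ and $\operatorname{link}_\Delta(\sigma)$ are $k$-decomposable. $\Delta$ is shellable if its facets admit an order $F_1,\dots,F_s$ such that for all $i<j$ there exist $v\in F_j\setminus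 F_i$ and $\ell<j$ with $F_j\setminus F_\ell=\{v\}$. *)

(* Defs.v *)
From mathcomp Require Import all_boot.
Set Implicit Arguments. Unset Strict Implicit. Unset Printing Implicit Defensive.

Definition clique (V : finType) (e : rel V) (A : {set V}) : bool :=
  [forall x in A, forall y in A, (x != y) ==> e x y].

(* Clique vertex-partition Pi = {W_1,...,W_p} (possibly empty blocks). *)
Definition clique_vertex_partition (V : finType) (e : rel V) (p : nat)
    (W : 'I_p -> {set V}) : Prop :=
  (forall i, clique e (W i)) /\
  (forall i j, i != j -> [disjoint W i & W j]) /\
  \bigcup_(i < p) W i = [set: V].

(* The t-clique whiskering G(Pi,t): new vertices x_{i,j}, i < p, j < t-1. *)
Definition whisker_vertex (V : finType) (p t : nat) : finType :=
  (V + ('I_p * 'I_t.-1))%type.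

Definition whisker_edge (V : finType) (e : rel V) (p : nat)
    (W : 'I_p -> {set V}) (t : nat) : rel (whisker_vertex V p t) :=
  fun a b =>
    match a, b with
    | inl u, inl v => e u v
    | inl u, inr x => u \in W x.1
    | inr x, inl u => u \in W x.1
    | inr x, inr y => (x.1 == y.1) && (x.2 != y.2)
    end.

Definition CF (V : finType) (t : nat) (e : rel V) : {set {set V}} :=
  [set F : {set V} | ~~ [exists K : {set V},
      [&& K \subset F, #|K| == t & clique e K]]].

Definition link (V : finType) (D : {set {set V}}) (s : {set V}) : {set {set V}} :=
  [set F in D | [disjoint F & s] && ((F :|: s) \in D)].

Definition deletion (V : finType) (D : {set {set V}}) (s : {set V}) : {set {set V}} :=
  [set H in D | [disjoint H & s]].

Definition shedding_face (V : finType) (D : {set {set V}}) (s : {set V}) : Prop :=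
  forall tau, tau \in D -> s \subset tau -> forall v, v \in s ->
    exists w, w \notin tau /\ ((w |: tau) :\ v) \in D.

(* A simplex, including the void complex and {emptyset}. *)
Definition is_simplex (V : finType) (D : {set {set V}}) : Prop :=
  D = set0 \/ exists F : {set V}, D = powerset F.

(* k-decomposability; dim s = #|s| - 1 <= k  iff  #|s| <= k+1. *)
Inductive k_decomposable (V : finType) (k : nat) : {set {set V}} -> Prop :=
  | kdec_simplex (D : {set {set V}}) : is_simplex D -> k_decomposable k D
  | kdec_shed (D : {set {set V}}) (s : {set V}) : s \in D -> shedding_face D s -> #|s| <= k.+1 ->
      k_decomposable k (deletion D s) -> k_decomposable k (link D s) ->
      k_decomposable k D.

Definition facets (V : finType) (D : {set {set V}}) : {set {set V}} :=
  [set F in D | [forall G in D, (F \subset G) ==> (G == F)]].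

Definition shellable (V : finType) (D : {set {set V}}) : Prop :=
  exists s : seq {set V},
    [/\ uniq s, (forall F, (F \in s) = (F \in facets D)) &
      forall i j, i < j -> j < size s ->
        exists2 v, v \in nth set0 s j :\: nth set0 s i &
          exists2 l, l < j & nth set0 s j :\: nth set0 s l = [set v]].
Arguments whisker_edge [V] e [p] W t _ _.

(* Main.v *)
Require Import Defs.
From mathcomp Require Import all_boot zify.
Set Implicit Arguments. Unset Strict Implicit. Unset Printing Implicit Defensive.

Definition downc (T : finType) (D : {set {set T}}) :=
  forall A B : {set T}, B \in D -> A \subset B -> A \in D.

Lemma facetsP (T : finType) (D : {set {set T}}) F :
  reflect (F \in D /\ forall G, G \in D -> F \subset G -> G = F) (F \in facets D).
Proof.
rewrite inE; apply: (iffP andP) => [[FD /forall_inP H]|[FD H]]; split => //.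
  by move=> G GD FG; apply/eqP; move: (H G GD); rewrite FG.
by apply/forall_inP => G GD; apply/implyP => FG; rewrite (H G GD FG).
Qed.

Lemma facet_above (T : finType) (D : {set {set T}}) F :
  F \in D -> exists2 G, G \in facets D & F \subset G.
Proof.
move=> FD.
have P0 : (fun G : {set T} => (G \in D) && (F \subset G)) F by rewrite /= FD subxx.
case: (@arg_maxnP _ F (fun G : {set T} => (G \in D) && (F \subset G)) (fun G : {set T} => #|G|) P0) => G /andP[GD FG] Hmax.
exists G => //; apply/facetsP; split => // H HD GH.
apply/eqP; rewrite eq_sym eqEcard GH /=.
by apply: Hmax; rewrite HD (subset_trans FG GH).
Qed.

Lemma shell_simplex (T : finType) (D : {set {set T}}) : is_simplex D -> shellable D.
Proof.
case=> [->|[F ->]].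
  exists [::]; split => // G; rewrite in_nil; apply/esym/negbTE/facetsP.
  by case; rewrite inE.
exists [:: F]; split => //; last by move=> i [|j] //; rewrite ltnS.
move=> G; rewrite inE; apply/eqP/facetsP => [->|[GD H]].
  split; first by rewrite powersetE.
  by move=> H; rewrite powersetE => HF FH; apply/eqP; rewrite eqEsubset HF FH.
by apply/esym/H; rewrite ?powersetE // -powersetE.
Qed.

Lemma in_deletion1 (T : finType) (D : {set {set T}}) v H :
  (H \in deletion D [set v]) = (H \in D) && (v \notin H).
Proof. by rewrite inE disjoint_sym disjoints1. Qed.

Lemma in_link1 (T : finType) (D : {set {set T}}) v H :
  (H \in link D [set v]) = [&& H \in D, v \notin H & (v |: H) \in D].
Proof. by rewrite inE disjoint_sym disjoints1 setUC. Qed.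

Lemma setU1D (T : finType) (v : T) (A B : {set T}) : v \notin A ->
  (v |: A) :\: (v |: B) = A :\: B.
Proof.
move=> vA; apply/setP => y; rewrite !inE.
by case: (eqVneq y v) => [->|] //=; rewrite (negbTE vA) andbF.
Qed.

Lemma shell_combine (T : finType) (D : {set {set T}}) v :
  downc D -> [set v] \in D -> shedding_face D [set v] ->
  shellable (deletion D [set v]) -> shellable (link D [set v]) -> shellable D.
Proof.
move=> dD vD sh [s1 [u1 m1 c1]] [s2 [u2 m2 c2]].
have shv : forall tau, tau \in D -> v \in tau ->
    exists w, w \notin tau /\ ((w |: tau) :\ v) \in D.
  by move=> tau tD vt; apply: sh => //; rewrite ?sub1set ?inE.
have fa : forall F, F \in facets (deletion D [set v]) -> (F \in facets D) && (v \notin F).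
  move=> F /facetsP[]; rewrite in_deletion1 => /andP[FD vF] H.
  rewrite vF andbT; apply/facetsP; split => // G GD FG.
  case vG: (v \in G).
    have vFD : v |: F \in D by apply: dD GD _; rewrite subUset sub1set vG FG.
    case: (shv _ vFD (setU11 _ _)) => w [wF wD].
    have e1 : (w |: (v |: F)) :\ v = w |: F.
      apply/setP => y; rewrite !inE; case: (eqVneq y v) => [->|yv] //=.
      by rewrite (negbTE vF) orbF; apply/esym/negbTE; apply: contra wF => /eqP <-; rewrite !inE eqxx.
    rewrite e1 in wD.
    have : w |: F = F.
      apply: H; last by rewrite subsetUr.
      rewrite in_deletion1 wD !inE negb_or vF andbT.
      by apply: contra wF => /eqP ->; rewrite !inE eqxx.
    move=> eF; case/negP: wF; by rewrite -eF !inE eqxx orbT.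
  by apply: H => //; rewrite in_deletion1 GD vG.
have fb : forall G, G \in facets (link D [set v]) -> (v |: G \in facets D) && (v \notin G).
  move=> G /facetsP[]; rewrite in_link1 => /and3P[GD vG vGD] H.
  rewrite vG andbT; apply/facetsP; split => // K KD GK.
  have vK : v \in K by apply: (subsetP GK); rewrite !inE eqxx.
  have e2 : K :\ v = G.
    apply: H.
      rewrite in_link1 !inE eqxx /= setD1K // KD andbT.
      by apply: dD KD _; apply: subsetDl.
    apply/subsetP => y yG; rewrite !inE (subsetP GK) ?inE ?yG ?orbT // andbT.
    by apply: contra vG => /eqP <-.
  by rewrite -e2 setD1K.
have fc : forall F, F \in facets D ->
    ((v \notin F) && (F \in facets (deletion D [set v]))) ||
    ((v \in F) && (F :\ v \in facets (link D [set v]))).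
  move=> F /facetsP[FD H]; case vF: (v \in F) => /=.
    apply/facetsP; split.
      by rewrite in_link1 !inE eqxx /= setD1K // FD andbT; apply: dD FD (subsetDl _ _).
    move=> G; rewrite in_link1 => /and3P[GD vG vGD] FG.
    have : v |: G = F.
      apply: H => //; apply/subsetP => y yF; rewrite !inE.
      by case: (eqVneq y v) => //= yv; apply: (subsetP FG); rewrite !inE yv.
    by move=> <-; rewrite setU1K.
  rewrite orbF; apply/facetsP; split; first by rewrite in_deletion1 FD vF.
  by move=> G; rewrite in_deletion1 => /andP[GD _]; apply: H.
pose s := s1 ++ [seq v |: G | G <- s2].
have ms1 : forall F, F \in s1 -> (F \in facets D) && (v \notin F).
  by move=> F; rewrite m1 => /fa.
have ms2 : forall G, G \in s2 -> (v |: G \in facets D) && (v \notin G).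
  by move=> G; rewrite m2 => /fb.
exists s; split.
- rewrite cat_uniq u1 /= map_inj_in_uniq ?u2 ?andbT.
    apply/hasPn => F /mapP[G _ ->]; apply/negP => /ms1 /andP[_].
    by rewrite !inE eqxx.
  move=> G1 G2 /ms2/andP[_ h1] /ms2/andP[_ h2] e.
  by rewrite -(setU1K h1) e setU1K.
- move=> F; rewrite mem_cat; apply/idP/idP.
    case/orP => [/ms1/andP[]//|/mapP[G /ms2/andP[]] h _ -> //].
  case/fc/orP => /andP[h1 h2]; first by rewrite m1 h2.
  by apply/orP; right; apply/mapP; exists (F :\ v); rewrite ?m2 // setD1K.
- move=> i j ij js.
  have sz : size s = size s1 + size s2 by rewrite size_cat size_map.
  case: (ltnP j (size s1)) => j1.
    have i1 : i < size s1 by apply: ltn_trans ij j1.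
    case: (c1 i j ij j1) => w wi [l lj wl].
    rewrite /s !nth_cat j1 i1; exists w => //; exists l => //.
    by rewrite nth_cat (ltn_trans lj j1).
  have j2 : j - size s1 < size s2 by rewrite ltn_subLR // -sz.
  have Fj : nth set0 s j = v |: nth set0 s2 (j - size s1).
    by rewrite /s nth_cat ltnNge j1 /= (nth_map set0).
  have Gj := ms2 _ (mem_nth set0 j2).
  case: (ltnP i (size s1)) => i1.
    have Fi : nth set0 s i = nth set0 s1 i by rewrite /s nth_cat i1.
    have vi : v \notin nth set0 s i by rewrite Fi; case/andP: (ms1 _ (mem_nth set0 i1)).
    exists v; first by rewrite !inE vi Fj !inE eqxx.
    have FjD : nth set0 s j \in D by case/andP: Gj => /facetsP[]; rewrite Fj.
    case: (shv _ FjD) => [|w [wF wD]]; first by rewrite Fj !inE eqxx.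
    have : (w |: nth set0 s j) :\ v \in deletion D [set v] by rewrite in_deletion1 wD !inE eqxx.
    case/facet_above => F' F'f HF'.
    have F's : F' \in s1 by rewrite m1.
    have vF' : v \notin F' by case/andP: (ms1 _ F's).
    exists (index F' s1); first by rewrite (leq_trans _ j1) // index_mem.
    have -> : nth set0 s (index F' s1) = F' by rewrite /s nth_cat index_mem F's nth_index.
    apply/setP => y; rewrite !inE; case: (eqVneq y v) => [->|yv] /=.
      by rewrite vF' Fj !inE eqxx.
    apply/negbTE; apply/negP => /andP[yF' yF]; case/negP: yF'.
    by apply: (subsetP HF'); rewrite !inE yv yF orbT.
  have i2 : i - size s1 < j - size s1 by lia.
  case: (c2 _ _ i2 j2) => w wi [l lj wl].
  have Fi : nth set0 s i = v |: nth set0 s2 (i - size s1).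
    by rewrite /s nth_cat ltnNge i1 /= (nth_map set0) // (ltn_trans i2 j2).
  have vG : v \notin nth set0 s2 (j - size s1) by case/andP: Gj.
  exists w; first by rewrite Fi Fj setU1D.
  exists (l + size s1); first by lia.
  have -> : nth set0 s (l + size s1) = v |: nth set0 s2 l.
    by rewrite /s nth_cat ltnNge leq_addl /= addnK (nth_map set0) // (ltn_trans lj j2).
  by rewrite Fj setU1D.
Qed.

Inductive vdec (T : finType) : {set {set T}} -> Prop :=
| vd_simplex (D : {set {set T}}) : is_simplex D -> vdec D
| vd_shed (D : {set {set T}}) v : [set v] \in D -> shedding_face D [set v] ->
    vdec (deletion D [set v]) -> vdec (link D [set v]) -> vdec D.

Lemma vdec_kdec (T : finType) (D : {set {set T}}) k : vdec D -> k_decomposable k D.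
Proof.
elim=> [D0 h|D0 v vD sh _ h1 _ h2]; first by apply: kdec_simplex.
by apply: (kdec_shed vD sh) => //; rewrite cards1.
Qed.

Lemma vdec_shell (T : finType) (D : {set {set T}}) : vdec D -> downc D -> shellable D.
Proof.
elim=> [D0 h _|D0 v vD sh _ h1 _ h2 dD]; first by apply: shell_simplex.
apply: (shell_combine (v:=v)) => //.
  apply: h1 => A B; rewrite !in_deletion1 => /andP[BD vB] AB.
  by rewrite (dD _ _ BD AB); apply: contra vB; apply: (subsetP AB).
apply: h2 => A B; rewrite !in_link1 => /and3P[BD vB vBD] AB.
rewrite (dD _ _ BD AB) (dD _ _ vBD) ?setUS // andbT.
by apply: contra vB; apply: (subsetP AB).
Qed.

Lemma CFP (T : finType) (E : rel T) (t : nat) (A : {set T}) :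
  reflect (forall K : {set T}, K \subset A -> clique E K -> #|K| != t) (A \in CF t E).
Proof.
rewrite inE; apply: (iffP idP) => [H K KA Kc|H].
  by apply: contra H => Kt; apply/existsP; exists K; rewrite KA Kt.
by apply/existsP => [[K /and3P[KA Kt Kc]]]; case/negP: (H K KA Kc).
Qed.

Lemma CF_down (T : finType) (E : rel T) (t : nat) (A B : {set T}) :
  B \in CF t E -> A \subset B -> A \in CF t E.
Proof.
move=> /CFP H AB; apply/CFP => K KA; apply: H; exact: subset_trans KA AB.
Qed.

Lemma clique_sub (T : finType) (E : rel T) (A B : {set T}) :
  clique E B -> A \subset B -> clique E A.
Proof.
move=> /forall_inP H AB; apply/forall_inP => x xA; apply/forall_inP => y yA.
by move: (H x (subsetP AB x xA)) => /forall_inP; apply; apply: (subsetP AB).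
Qed.

Lemma cliqueE (T : finType) (E : rel T) (K : {set T}) x y :
  clique E K -> x \in K -> y \in K -> x != y -> E x y.
Proof.
by move=> /forall_inP H xK yK; move: (H x xK) => /forall_inP /(_ y yK) /implyP; apply.
Qed.

Definition Cx (T : finType) (E : rel T) (t : nat) (U S : {set T}) : {set {set T}} :=
  [set F : {set T} | (F \subset U) && ((F :|: S) \in CF t E)].

Lemma inCx (T : finType) (E : rel T) (t : nat) (U S F : {set T}) :
  (F \in Cx E t U S) = (F \subset U) && (F :|: S \in CF t E).
Proof. by rewrite [in LHS]inE. Qed.

Lemma Cx_down (T : finType) (E : rel T) (t : nat) (U S : {set T}) : downc (Cx E t U S).
Proof.
move=> A B; rewrite !inCx => /andP[BU BS] AB.
by rewrite (subset_trans AB BU) (CF_down BS) // setSU.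
Qed.

Lemma Cx_del (T : finType) (E : rel T) (t : nat) (U S : {set T}) v :
  deletion (Cx E t U S) [set v] = Cx E t (U :\ v) S.
Proof.
apply/setP => F; rewrite in_deletion1 !inCx subsetD1.
by rewrite -!andbA [X in _ && X]andbC.
Qed.

Lemma Cx_link (T : finType) (E : rel T) (t : nat) (U S : {set T}) v : v \in U ->
  link (Cx E t U S) [set v] = Cx E t (U :\ v) (v |: S).
Proof.
move=> vU; apply/setP => F; rewrite in_link1 !inCx subsetD1.
apply/idP/idP.
  by case/and3P => /andP[FU _] vF /andP[_ H]; rewrite FU vF /= setUCA setUA.
case/andP => /andP[FU vF] H; rewrite FU vF /=.
rewrite subUset sub1set vU FU -setUA -setUCA H andbT /=.
by rewrite andbT; apply: CF_down H _; rewrite setUS // subsetUr.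
Qed.

Lemma Cx_skip (T : finType) (E : rel T) (t : nat) (U S : {set T}) v :
  (v |: S) \notin CF t E -> Cx E t U S = Cx E t (U :\ v) S.
Proof.
move=> vS; apply/setP => F; rewrite !inCx subsetD1.
case vF: (v \in F); last by rewrite andbT.
rewrite andbF /=; apply/negbTE; apply: contra vS => /andP[_ H].
by apply: CF_down H _; rewrite setSU // sub1set vF.
Qed.

Lemma Cx_empty (T : finType) (E : rel T) (t : nat) (U S : {set T}) :
  S \notin CF t E -> Cx E t U S = set0.
Proof.
move=> nS; apply/setP => F; rewrite inCx in_set0; apply/negbTE; apply/negP => /andP[_ H].
by case/negP: nS; apply: CF_down H _; rewrite subsetUr.
Qed.

Lemma Cx_full (T : finType) (E : rel T) (t : nat) (U S : {set T}) :
  (U :|: S) \in CF t E -> Cx E t U S = powerset U.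
Proof.
move=> H; apply/setP => F; rewrite inCx powersetE.
case FU: (F \subset U) => //=; by apply: CF_down H _; rewrite setSU.
Qed.

Lemma Cx_single (T : finType) (E : rel T) (t : nat) (U S : {set T}) v :
  v \in U -> (v |: S) \in CF t E -> [set v] \in Cx E t U S.
Proof. by move=> vU vS; rewrite inCx sub1set vU. Qed.

Definition Xs (V : finType) (p t : nat) (i : 'I_p) : {set whisker_vertex V p t} :=
  [set (inr (i, j) : whisker_vertex V p t) | j : 'I_t.-1].

Definition Bl (V : finType) (p : nat) (W : 'I_p -> {set V}) (t : nat) (i : 'I_p)
  : {set whisker_vertex V p t} :=
  [set (inl u : whisker_vertex V p t) | u in W i] :|: Xs V t i.

Lemma inXs (V : finType) (p t : nat) (i : 'I_p) (x : whisker_vertex V p t) :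
  (x \in Xs V t i) = (if x is inr y then y.1 == i else false).
Proof.
apply/imsetP/idP => [[j _ ->] //|].
by case: x => // [[i' j]] /= /eqP ->; exists j.
Qed.

Lemma inBl (V : finType) (p : nat) (W : 'I_p -> {set V}) (t : nat) (i : 'I_p)
  (x : whisker_vertex V p t) :
  (x \in Bl W t i) = (match x with inl u => u \in W i | inr y => y.1 == i end).
Proof.
rewrite /Bl in_setU inXs; case: x => [u|y]; last first.
  rewrite orbC /=; case: (y.1 == i) => //=.
  by apply/negbTE/negP => /imsetP[u _].
rewrite orbF; apply/imsetP/idP => [[u' u'W [->]] //|uW].
by exists u.
Qed.

Lemma cardXs (V : finType) (p t : nat) (i : 'I_p) : #|Xs V t i| = t.-1.
Proof.
rewrite card_imset ?card_ord //.
by move=> j1 j2 [].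
Qed.

Lemma XsBl (V : finType) (p : nat) (W : 'I_p -> {set V}) (t : nat) (i : 'I_p) :
  Xs V t i \subset Bl W t i.
Proof. exact: subsetUr. Qed.

Lemma clique_Bl (V : finType) (e : rel V) (p : nat) (W : 'I_p -> {set V}) (t : nat)
  (hc : forall i, clique e (W i)) (i : 'I_p) : clique (whisker_edge e W t) (Bl W t i).
Proof.
apply/forall_inP => x; rewrite inBl => xB; apply/forall_inP => y; rewrite inBl => yB.
apply/implyP => xy.
case: x y xB yB xy => [u|[i1 j1]] [v|[i2 j2]] //= xB yB xy.
- by apply: (cliqueE (hc i)) => //; apply: contra xy => /eqP ->.
- by rewrite (eqP yB).
- by rewrite (eqP xB).
- rewrite (eqP xB) (eqP yB) eqxx /=; apply: contra xy => /eqP ->.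
  by rewrite (eqP xB) (eqP yB).
Qed.

Lemma nbr (V : finType) (e : rel V) (p : nat) (W : 'I_p -> {set V}) (t : nat)
  (y : 'I_p * 'I_t.-1) (b : whisker_vertex V p t) :
  whisker_edge e W t (inr y) b -> b \in Bl W t y.1.
Proof. by rewrite inBl; case: b => //= z /andP[/eqP -> _]. Qed.

Lemma swap_CF (V : finType) (e : rel V) (p : nat) (W : 'I_p -> {set V}) (t : nat)
  (hc : forall i, clique e (W i)) (i : 'I_p) (A : {set whisker_vertex V p t}) w x :
  A \in CF t (whisker_edge e W t) -> w \in Xs V t i -> x \in Bl W t i -> x \in A ->
  (w |: A) :\ x \in CF t (whisker_edge e W t).
Proof.
move=> /CFP HA wX xB xA; apply/CFP => K KA Kc; apply/negP => /eqP Kt.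
case wK: (w \in K); last first.
  suff KA' : K \subset A by move: (HA K KA' Kc); rewrite Kt eqxx.
  apply/subsetP => y yK; move: (subsetP KA y yK); rewrite !inE => /andP[_ /orP[/eqP yw|//]].
  by move: wK; rewrite -yw yK.
have KB : K \subset Bl W t i.
  apply/subsetP => y yK; case: (eqVneq y w) => [->|yw]; first exact: (subsetP (XsBl W t i) w wX).
  move: wX; rewrite inXs; case: w wK yw {KA} => // z wK yw /eqP zi.
  by rewrite -zi; apply: (@nbr V e); apply: (cliqueE Kc) => //; rewrite eq_sym.
have xK : x \notin K.
  by apply/negP => /(subsetP KA); rewrite !inE eqxx.
pose K' := x |: (K :\ w).
have K'A : K' \subset A.
  apply/subsetP => y; rewrite !inE => /orP[/eqP ->//|/andP[yw yK]].
  by move: (subsetP KA y yK); rewrite !inE (negbTE yw) => /andP[_].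
have K'c : clique (whisker_edge e W t) K'.
  apply: clique_sub (clique_Bl t hc i) _.
  by rewrite subUset sub1set xB (subset_trans (subsetDl _ _) KB).
move: (HA K' K'A K'c); apply/negP/negPn/eqP.
  rewrite cardsU1 !inE negb_and negbK xK orbT /=.
  by rewrite -[in RHS]Kt (cardsD1 w K) wK.
Qed.

Lemma Cx_shed (V : finType) (e : rel V) (p : nat) (W : 'I_p -> {set V}) (t : nat)
  (hc : forall i, clique e (W i)) (i : 'I_p) (U S : {set whisker_vertex V p t}) v :
  [disjoint U & S] -> v \in U -> v \in Bl W t i ->
  (forall tau, tau \in Cx (whisker_edge e W t) t U S -> v \in tau ->
     exists2 w, w \in Xs V t i :&: U & w \notin tau) ->
  shedding_face (Cx (whisker_edge e W t) t U S) [set v].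
Proof.
move=> dUS vU vB H tau tD; rewrite sub1set => vt v'; rewrite inE => /eqP ->.
case: (H tau tD vt) => w; rewrite inE => /andP[wX wU] wt.
exists w; split => //.
move: tD; rewrite !inCx => /andP[tU tS].
have vS : v \notin S by rewrite (disjointFr dUS vU).
apply/andP; split.
  apply/subsetP => y; rewrite !inE => /andP[_ /orP[/eqP ->//|/(subsetP tU)//]].
have -> : (w |: tau) :\ v :|: S = (w |: (tau :|: S)) :\ v.
  apply/setP => y; rewrite !inE; case: (eqVneq y v) => [->|] //=.
    by rewrite (negbTE vS).
  by rewrite orbA.
by apply: (swap_CF hc tS wX vB); rewrite !inE vt.
Qed.

Lemma dis_del (T : finType) (U S : {set T}) v :
  [disjoint U & S] -> [disjoint U :\ v & S].
Proof. by apply: disjointWl; apply: subsetDl. Qed.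

Lemma dis_link (T : finType) (U S : {set T}) v :
  [disjoint U & S] -> [disjoint U :\ v & v |: S].
Proof.
move=> d; rewrite -setI_eq0; apply/eqP/setP => y; rewrite !inE.
case: (eqVneq y v) => //= yv; apply/negbTE/negP => /andP[yU yS].
by rewrite (disjointFr d yU) in yS.
Qed.

Lemma main_vdec (V : finType) (e : rel V) (p : nat) (W : 'I_p -> {set V}) (t : nat)
  (hc : forall i, clique e (W i)) (hcov : forall u, exists i, u \in W i) (ht : 2 <= t) n :
  forall U S : {set whisker_vertex V p t}, #|U| <= n -> [disjoint U & S] ->
  ((forall u, inl u \notin U) \/ (forall y, inr y \in U :|: S)) ->
  vdec (Cx (whisker_edge e W t) t U S).
Proof.
elim: n => [|n IH] U S hU dUS inv.
  have -> : U = set0 by apply: cards0_eq; apply/eqP; rewrite -leqn0.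
  case SCF: (S \in CF t (whisker_edge e W t)).
    by rewrite Cx_full ?set0U //; apply: vd_simplex; right; exists set0.
  by rewrite Cx_empty ?SCF //; apply: vd_simplex; left.
case SCF: (S \in CF t (whisker_edge e W t)); last first.
  by rewrite Cx_empty ?SCF //; apply: vd_simplex; left.
have cardD : forall v, v \in U -> #|U :\ v| <= n.
  by move=> v vU; move: hU; rewrite (cardsD1 v U) vU add1n ltnS.
case: (boolP [exists u, inl u \in U]) => [/existsP[u uU]|noinl].
  have inv2 : forall y, inr y \in U :|: S.
    by case: inv => // H; move: (H u); rewrite uU.
  have inv3 : forall y, inr y \in U :\ inl u :|: S.
    by move=> y; move: (inv2 y); rewrite !inE.
  case: (hcov u) => i uW.
  case vS: (inl u |: S \in CF t (whisker_edge e W t)); last first.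
    rewrite (Cx_skip _ (negbT vS)); apply: IH; rewrite ?cardD ?dis_del //.
    by right.
  apply: (vd_shed (v := inl u)).
  - exact: Cx_single.
  - apply: (Cx_shed hc (i := i)) => //; first by rewrite inBl.
    move=> tau tD vt.
    case: (boolP [exists w in Xs V t i :&: U, w \notin tau]) => [/exists_inP[w wXU wt]|H].
      by exists w.
    exfalso; move: tD; rewrite inCx => /andP[tU tS].
    move/exists_inPn: H => H.
    have XsS : Xs V t i \subset tau :|: S.
      apply/subsetP => w wX; move: (wX); rewrite inXs; case: w wX => // y wX yi.
      move: (inv2 y); rewrite !in_setU => /orP[yU|yS]; last by rewrite yS orbT.
      apply/orP; left.
      by move: (H (inr y)); rewrite in_setI wX yU negbK; apply.
    move/CFP: tS => /(_ (inl u |: Xs V t i)).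
    have KB : inl u |: Xs V t i \subset Bl W t i.
      by rewrite subUset sub1set inBl uW XsBl.
    rewrite subUset sub1set in_setU vt XsS (clique_sub (clique_Bl t hc i) KB) /=.
    by rewrite cardsU1 cardXs inXs add1n prednK ?eqxx //; lia.
  - rewrite Cx_del; apply: IH; rewrite ?cardD ?dis_del //.
    by right.
  - rewrite Cx_link //; apply: IH; rewrite ?cardD ?dis_link //.
    by right => y; move: (inv2 y); rewrite !inE.
have nl : forall u, inl u \notin U.
  by move=> u; apply: contra noinl => h; apply/existsP; exists u.
case: (boolP [exists i, (Xs V t i :&: U) :|: S \notin CF t (whisker_edge e W t)]) => [/existsP[i iN]|allin].
  case: (set_0Vmem (Xs V t i :&: U)) => [X0|[x xXU]].
    by rewrite X0 set0U SCF in iN.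
  move: (xXU); rewrite in_setI => /andP[xX xU].
  have invl : forall u, inl u \notin U :\ x by move=> u; rewrite in_setD1 (negbTE (nl u)) andbF.
  case xS: (x |: S \in CF t (whisker_edge e W t)); last first.
    rewrite (Cx_skip _ (negbT xS)); apply: IH; rewrite ?cardD ?dis_del //.
    by left.
  apply: (vd_shed (v := x)).
  - exact: Cx_single.
  - apply: (Cx_shed hc (i := i)) => //; first exact: (subsetP (XsBl W t i) x xX).
    move=> tau tD vt.
    case: (boolP [exists w in Xs V t i :&: U, w \notin tau]) => [/exists_inP[w wXU wt]|H].
      by exists w.
    exfalso; move: tD; rewrite inCx => /andP[tU tS].
    move/exists_inPn: H => H.
    case/negP: iN; apply: CF_down tS _; apply: setSU.
    by apply/subsetP => w wXU; move: (H w wXU); rewrite negbK.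
  - rewrite Cx_del; apply: IH; rewrite ?cardD ?dis_del //.
    by left.
  - rewrite Cx_link //; apply: IH; rewrite ?cardD ?dis_link //.
    by left.
move/existsPn: allin => allin.
have US : U :|: S \in CF t (whisker_edge e W t).
  apply/CFP => K KUS Kc; apply/negP => /eqP Kt.
  case: (boolP (K \subset S)) => KS.
    by move/CFP: SCF => /(_ K KS Kc); rewrite Kt eqxx.
  case/subsetPn: KS => y yK yS.
  have yU : y \in U by move: (subsetP KUS y yK); rewrite in_setU (negbTE yS) orbF.
  destruct y as [u|z]; first by case/negP: (nl u).
  move: (allin z.1); rewrite negbK => /CFP /(_ K).
  suff -> : K \subset Xs V t z.1 :&: U :|: S by move=> /(_ isT Kc); rewrite Kt eqxx.
  apply/subsetP => k kK; rewrite in_setU.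
  case kS: (k \in S); first by rewrite orbT.
  have kU : k \in U by move: (subsetP KUS k kK); rewrite in_setU kS orbF.
  have kB : k \in Bl W t z.1.
    case: (eqVneq k (inr z)) => [->|kz]; first by rewrite inBl.
    by apply: (@nbr V e); apply: (cliqueE Kc) => //; rewrite eq_sym.
  rewrite orbF in_setI kU andbT inXs; move: kB kU; rewrite inBl.
  by case: k {kK kS} => // u _ kU; case/negP: (nl u).
by rewrite Cx_full //; apply: vd_simplex; right; exists U.
Qed.

Theorem theorem4p9 (V : finType) (e : rel V)
    (e_sym : symmetric e) (e_irr : irreflexive e)
    (p : nat) (W : 'I_p -> {set V})
    (hW : clique_vertex_partition e W) (t : nat) (ht : 2 <= t) :
  k_decomposable (t - 2) (CF t (whisker_edge e W t)) /\
  shellable (CF t (whisker_edge e W t)).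
Proof.
case: hW => hc [_ hU].
have hcov : forall u, exists i, u \in W i.
  move=> u; have : u \in \bigcup_(i < p) W i by rewrite hU inE.
  by case/bigcupP => i _ ui; exists i.
have eq : CF t (whisker_edge e W t) = Cx (whisker_edge e W t) t setT set0.
  by apply/setP => F; rewrite inCx subsetT setU0.
have vd : vdec (CF t (whisker_edge e W t)).
  rewrite eq; apply: (main_vdec hc hcov ht (n := #|[set: whisker_vertex V p t]|)) => //.
    by rewrite -setI_eq0 setI0.
  by right => y; rewrite !inE.
split; first exact: vdec_kdec.
by apply: vdec_shell => //; rewrite eq; apply: Cx_down.
Qed.
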